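(* Let $\alpha,\beta\in(0,\pi]$ and let $f:S_\alpha\to S_\beta$, $f(z)=z^{\beta/\alpha}$ (principal branch). Then for all $x,y\in S_\alpha$: if $\alpha\le\beta$, $$s_{S_\alpha}(x,y)\le s_{S_\beta}(f(x),f(y))\le\frac{\beta\sin(\alpha/2)}{\alpha\sin(\beta/2)}\,s_{S_\alpha}(x,y);$$ otherwise (if $\alpha>\beta$), $$\frac{\beta\sin(\alpha/2)}{\alpha\sin(\beta/2)}\,s_{S_\alpha}(x,y)\le s_{S_\beta}(f(x),f(y))\le s_{S_\alpha}(x,y).$$ Furthermore, the constants here are sharp.
   Context: $S_\theta=\{x\in\mathbb{C}:0<\arg(x)<\theta\}$. For a domain $G\subsetneq\mathbb{C}$, $s_G(x,y)=\frac{|x-y|}{\inf_{z\in\partial G}(|x-z|+|z-y|)}$. *)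

(* Defs.v *)
From Stdlib Require Import Reals.
From Coquelicot Require Import Coquelicot.
Open Scope R_scope.

Definition Arg (z : C) : R :=
  if Req_EM_T (Cmod z) 0 then 0
  else if Rle_dec 0 (Im z) then acos (Re z / Cmod z)
  else - acos (Re z / Cmod z).

Definition sector (theta : R) (x : C) : Prop :=
  x <> 0%C /\ 0 < Arg x /\ Arg x < theta.

Definition boundary (G : C -> Prop) (z : C) : Prop :=
  forall eps : R, 0 < eps ->
    (exists w, G w /\ Cmod (Cminus w z) < eps) /\
    (exists w, ~ G w /\ Cmod (Cminus w z) < eps).

Definition s_metric (G : C -> Prop) (x y : C) : R :=
  Cmod (Cminus x y) /
  real (Glb_Rbar (fun r => exists z, boundary G z /\
                     r = Cmod (Cminus x z) + Cmod (Cminus z y))).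

Definition cpow (z : C) (p : R) : C :=
  (Rpower (Cmod z) p * cos (p * Arg z), Rpower (Cmod z) p * sin (p * Arg z)).

(* Main.v *)
Require Import Defs.
From Stdlib Require Import Reals.
From Coquelicot Require Import Coquelicot.
From Stdlib Require Import Lra Psatz.
Open Scope R_scope.

Lemma mono (f df : R -> R) a b : a <= b ->
  (forall x, a <= x <= b -> is_derive f x (df x)) ->
  (forall x, a <= x <= b -> 0 <= df x) -> f a <= f b.
Proof.
  intros Hab Hd Hp. destruct (Req_dec a b) as [->|Hne]; [lra|].
  destruct (MVT_cor3 f df a b) as [c [H1 [H2 H3]]]; [lra| |].
  - intros x Hx1 Hx2. apply is_derive_Reals. apply Hd; lra.
  - rewrite H3. specialize (Hp c ltac:(lra)). nra.
Qed.

Notation sh := sinh.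
Notation ch := cosh.

Lemma exp_opp_mul x : exp x * exp (- x) = 1.
Proof. rewrite <- exp_plus. replace (x + - x) with 0 by ring. apply exp_0. Qed.

Lemma ch_sh x : ch x * ch x - sh x * sh x = 1.
Proof. unfold sinh, cosh. pose proof (exp_opp_mul x). nra. Qed.

Lemma ch_ge1 x : 1 <= ch x.
Proof. unfold cosh. pose proof (exp_opp_mul x). pose proof (exp_pos x).
  pose proof (exp_pos (-x)).
  assert (0 <= (exp x - exp (-x)) * (exp x - exp (-x))) by apply Rle_0_sqr. nra. Qed.

Lemma is_derive_sh (x : R) : is_derive sh x (ch x).
Proof. unfold sinh, cosh. auto_derive; auto. field. Qed.
Lemma is_derive_ch (x : R) : is_derive ch x (sh x).
Proof. unfold sinh, cosh. auto_derive; auto. field. Qed.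

Lemma sh0 : sh 0 = 0.
Proof. unfold sinh. rewrite Ropp_0, exp_0. field. Qed.

Lemma sh_ge_x x : 0 <= x -> x <= sh x.
Proof.
  intros Hx. assert (H : (fun t => sh t - t) 0 <= (fun t => sh t - t) x).
  { apply (mono (fun t => sh t - t) (fun t => ch t - 1) 0 x); auto.
    - intros t _. unfold sinh, cosh. auto_derive; auto. field.
    - intros t _. pose proof (ch_ge1 t). lra. }
  simpl in H. rewrite sh0 in H. lra.
Qed.

Lemma sh_nonneg x : 0 <= x -> 0 <= sh x.
Proof. intros; pose proof (sh_ge_x x H); lra. Qed.

Lemma sh_pos x : 0 < x -> 0 < sh x.
Proof. intros; pose proof (sh_ge_x x); lra. Qed.

Lemma sh_opp x : sh (- x) = - sh x.
Proof. unfold sinh. rewrite Ropp_involutive. field. Qed.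

Lemma ch_mono x y : 0 <= x <= y -> ch x <= ch y.
Proof. intros H. apply (mono ch sh x y); try lra.
  - intros; apply is_derive_ch.
  - intros; apply sh_nonneg; lra. Qed.

Lemma sh_scale p w : 1 <= p -> 0 <= w -> p * sh w <= sh (p * w).
Proof.
  intros Hp Hw.
  assert (H : (fun t => sh (p * t) - p * sh t) 0 <= (fun t => sh (p * t) - p * sh t) w).
  { apply (mono (fun t => sh (p * t) - p * sh t) (fun t => p * ch (p * t) - p * ch t) 0 w); auto.
    - intros t _. unfold sinh, cosh. auto_derive; auto. field.
    - intros t Ht. pose proof (ch_mono t (p * t) ltac:(nra)). nra. }
  simpl in H. rewrite Rmult_0_r, sh0 in H. lra.
Qed.

Lemma K2 v : 0 <= v -> 0 <= sh v ^ 3 + 3 * sh v - 3 * v * ch v.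
Proof.
  intros Hv.
  assert (H : (fun t => sh t ^ 3 + 3 * sh t - 3 * t * ch t) 0 <=
              (fun t => sh t ^ 3 + 3 * sh t - 3 * t * ch t) v).
  { apply (mono (fun t => sh t ^ 3 + 3 * sh t - 3 * t * ch t)
                (fun t => 3 * sh t * (sh t * ch t - t)) 0 v); auto.
    - intros t _. unfold sinh, cosh. auto_derive; auto. field.
    - intros t Ht. pose proof (sh_ge_x t ltac:(lra)). pose proof (ch_ge1 t).
      assert (0 <= sh t * ch t - t) by nra. nra. }
  simpl in H. rewrite sh0 in H. lra.
Qed.

Lemma K3 w p : 0 < w -> 1 <= p ->
  1 / (sh w)^2 <= p^2 / (sh (p * w))^2 + (p^2 - 1) / 3.
Proof.
  intros Hw Hp.
  assert (H : (fun q => q^2 / (sh (q * w))^2 + (q^2 - 1) / 3) 1 <=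
              (fun q => q^2 / (sh (q * w))^2 + (q^2 - 1) / 3) p).
  { apply (mono (fun q => q^2 / (sh (q * w))^2 + (q^2 - 1) / 3)
                (fun q => 2 * q / (3 * sh (q * w) ^ 3) *
                   (sh (q * w) ^ 3 + 3 * sh (q * w) - 3 * (q * w) * ch (q * w))) 1 p); auto.
    - intros t Ht. assert (Hs : 0 < sh (t * w)) by (apply sh_pos; nra).
      auto_derive.
      + rewrite Rmult_1_r. apply Rmult_integral_contrapositive_currified; lra.
      + field. lra.
    - intros t Ht. assert (Hs : 0 < sh (t * w)) by (apply sh_pos; nra).
      pose proof (K2 (t * w) ltac:(nra)).
      apply Rmult_le_pos; auto. apply Rmult_le_pos; [lra|].
      apply Rlt_le, Rinv_0_lt_compat. apply Rmult_lt_0_compat; [lra|]. apply pow_lt; auto. }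
  cbv beta in H. replace (1 * w) with w in H by ring. replace (1^2) with 1 in H by ring. lra.
Qed.

Lemma sin_le_x x : 0 <= x -> sin x <= x.
Proof. intros [H|<-]. apply Rlt_le, sin_lt_x; auto. rewrite sin_0; lra. Qed.

Lemma T1 v : 0 <= v <= PI -> 0 <= 3 * sin v - 3 * v * cos v - sin v ^ 3.
Proof.
  intros Hv.
  assert (H : (fun t => 3 * sin t - 3 * t * cos t - sin t ^ 3) 0 <=
              (fun t => 3 * sin t - 3 * t * cos t - sin t ^ 3) v).
  { apply (mono (fun t => 3 * sin t - 3 * t * cos t - sin t ^ 3)
                (fun t => 3 * sin t * (t - sin t * cos t)) 0 v); try lra.
    - intros t _. auto_derive; auto. ring.
    - intros t Ht. pose proof (sin_ge_0 t ltac:(lra) ltac:(lra)).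
      pose proof (sin_le_x t ltac:(lra)). pose proof (COS_bound t).
      assert (0 <= t - sin t * cos t) by nra. nra. }
  cbv beta in H. rewrite sin_0 in H. lra.
Qed.

Lemma T2 g p : 0 < g -> 1 <= p -> p * g <= PI / 2 ->
  1 / (sin g)^2 <= p^2 / (sin (p * g))^2 - (p^2 - 1) / 3.
Proof.
  intros Hg Hp Hpg. pose proof PI_RGT_0 as HPI.
  assert (H : (fun q => q^2 / (sin (q * g))^2 - (q^2 - 1) / 3) 1 <=
              (fun q => q^2 / (sin (q * g))^2 - (q^2 - 1) / 3) p).
  { apply (mono (fun q => q^2 / (sin (q * g))^2 - (q^2 - 1) / 3)
                (fun q => 2 * q / (3 * sin (q * g) ^ 3) *
                   (3 * sin (q * g) - 3 * (q * g) * cos (q * g) - sin (q * g) ^ 3)) 1 p); auto.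
    - intros t Ht. assert (Hs : 0 < sin (t * g)) by (apply sin_gt_0; nra).
      auto_derive.
      + rewrite Rmult_1_r. apply Rmult_integral_contrapositive_currified; lra.
      + field. lra.
    - intros t Ht. assert (Hs : 0 < sin (t * g)) by (apply sin_gt_0; nra).
      pose proof (T1 (t * g) ltac:(nra)).
      apply Rmult_le_pos; auto. apply Rmult_le_pos; [lra|].
      apply Rlt_le, Rinv_0_lt_compat. apply Rmult_lt_0_compat; [lra|]. apply pow_lt; auto. }
  cbv beta in H. replace (1 * g) with g in H by ring. replace (1^2) with 1 in H by ring. lra.
Qed.

Lemma T3 p x : 1 <= p -> 0 <= x -> p * x <= PI ->
  p * cos (p * x) * sin x - sin (p * x) * cos x <= 0.
Proof.
  intros Hp Hx Hpx.
  assert (H : (fun t => - (p * cos (p * t) * sin t - sin (p * t) * cos t)) 0 <=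
              (fun t => - (p * cos (p * t) * sin t - sin (p * t) * cos t)) x).
  { apply (mono (fun t => - (p * cos (p * t) * sin t - sin (p * t) * cos t))
                (fun t => (p^2 - 1) * sin (p * t) * sin t) 0 x); try lra.
    - intros t _. auto_derive; auto. ring.
    - intros t Ht. pose proof (sin_ge_0 t ltac:(lra) ltac:(nra)).
      pose proof (sin_ge_0 (p * t) ltac:(nra) ltac:(nra)).
      assert (0 <= p^2 - 1) by nra.
      apply Rmult_le_pos; auto. apply Rmult_le_pos; auto. }
  cbv beta in H. rewrite Rmult_0_r, sin_0 in H. lra.
Qed.

Lemma T4 p d e : 1 <= p -> 0 < d <= e -> p * e <= PI / 2 ->
  sin (p * e) / sin e <= sin (p * d) / sin d.
Proof.
  intros Hp Hde Hpe. pose proof PI_RGT_0 as HPI.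
  assert (H : (fun t => - (sin (p * t) / sin t)) d <=
              (fun t => - (sin (p * t) / sin t)) e).
  { apply (mono (fun t => - (sin (p * t) / sin t))
                (fun t => - (p * cos (p * t) * sin t - sin (p * t) * cos t) / (sin t)^2) d e); try lra.
    - intros t Ht. assert (Hs : 0 < sin t) by (apply sin_gt_0; nra).
      auto_derive.
      + lra.
      + field. lra.
    - intros t Ht. assert (Hs : 0 < sin t) by (apply sin_gt_0; nra).
      pose proof (T3 p t Hp ltac:(lra) ltac:(nra)).
      apply Rmult_le_pos; [lra|]. apply Rlt_le, Rinv_0_lt_compat. apply pow_lt; auto. }
  cbv beta in H. lra.
Qed.

Lemma T5 p x : 1 <= p -> 0 <= x -> p * x <= PI -> sin (p * x) <= p * sin x.
Proof.
  intros Hp Hx Hpx.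
  assert (H : (fun t => p * sin t - sin (p * t)) 0 <= (fun t => p * sin t - sin (p * t)) x).
  { apply (mono (fun t => p * sin t - sin (p * t)) (fun t => p * cos t - p * cos (p * t)) 0 x); try lra.
    - intros t _. auto_derive; auto. ring.
    - intros t Ht. pose proof (cos_decr_1 t (p * t) ltac:(lra) ltac:(nra) ltac:(nra) ltac:(nra) ltac:(nra)).
      nra. }
  cbv beta in H. rewrite Rmult_0_r, sin_0 in H. lra.
Qed.

Lemma L_alg a b c a' b' c' P : 0 <= a -> 0 <= b -> b <= c -> 0 < c ->
  P * a <= a' -> b' <= P * b -> c' <= P * c -> b * c' <= b' * c -> 0 <= b' -> 0 <= c' ->
  (a + b) * (a' + c') <= (a' + b') * (a + c).
Proof.
  intros.
  assert (H9 : 0 <= P * c - P * b - c' + b').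
  { assert (0 <= c * (P * c - P * b - c' + b')).
    { assert (0 <= (c - b) * (P * c - c')) by (apply Rmult_le_pos; lra). nra. }
    destruct (Rle_or_lt 0 (P * c - P * b - c' + b')); auto. nra. }
  assert (0 <= (a' - P * a) * (c - b)) by (apply Rmult_le_pos; lra).
  assert (0 <= a * (P * c - P * b - c' + b')) by (apply Rmult_le_pos; lra).
  nra.
Qed.

Definition Fq w d e := (sh w ^ 2 + sin d ^ 2) / (sh w ^ 2 + sin e ^ 2).

Lemma sh2_abs x : sh x ^ 2 = sh (Rabs x) ^ 2.
Proof. destruct (Rabs_pos x). unfold Rabs; destruct (Rcase_abs x); [rewrite sh_opp|]; ring.
  unfold Rabs; destruct (Rcase_abs x); [rewrite sh_opp|]; ring. Qed.

Lemma sh2_scale p w : 1 <= p -> p^2 * sh w ^ 2 <= sh (p * w) ^ 2.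
Proof.
  intros Hp. rewrite (sh2_abs w), (sh2_abs (p * w)).
  rewrite Rabs_mult, (Rabs_right p) by lra.
  pose proof (sh_scale p (Rabs w) Hp (Rabs_pos w)).
  pose proof (sh_nonneg (Rabs w) (Rabs_pos w)). replace (p ^ 2 * sh (Rabs w) ^ 2) with ((p * sh (Rabs w)) ^ 2) by ring. apply pow_incr; split; [apply Rmult_le_pos|]; lra.
Qed.

Lemma sin2_scale p x : 1 <= p -> 0 <= x -> p * x <= PI -> sin (p * x) ^ 2 <= p^2 * sin x ^ 2.
Proof.
  intros. pose proof (T5 p x H H0 H1). pose proof (sin_ge_0 (p * x) ltac:(nra) H1). nra.
Qed.

Lemma sin2_ratio p d e : 1 <= p -> 0 <= d <= e -> 0 < e -> p * e <= PI / 2 ->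
  sin d ^ 2 * sin (p * e) ^ 2 <= sin (p * d) ^ 2 * sin e ^ 2.
Proof.
  intros Hp Hde He Hpe. pose proof PI_RGT_0 as HPI.
  destruct (Req_dec d 0) as [->|Hd0].
  { rewrite sin_0. assert (0 <= sin (p * 0) ^ 2 * sin e ^ 2) by (apply Rmult_le_pos; apply pow2_ge_0). nra. }
  pose proof (T4 p d e Hp ltac:(lra) Hpe).
  assert (0 < sin d) by (apply sin_gt_0; nra).
  assert (0 < sin e) by (apply sin_gt_0; nra).
  assert (0 <= sin (p * e)) by (apply sin_ge_0; nra).
  assert (sin (p * e) * sin d <= sin (p * d) * sin e).
  { replace (sin (p * e) * sin d) with ((sin (p * e) / sin e) * (sin d * sin e)) by (field; lra).
    replace (sin (p * d) * sin e) with ((sin (p * d) / sin d) * (sin d * sin e)) by (field; lra).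
    apply Rmult_le_compat_r; nra. }
  replace (sin d ^ 2 * sin (p * e) ^ 2) with ((sin (p * e) * sin d) ^ 2) by ring. replace (sin (p * d) ^ 2 * sin e ^ 2) with ((sin (p * d) * sin e) ^ 2) by ring. apply pow_incr; split; [apply Rmult_le_pos|]; lra.
Qed.

Lemma sin_le_mono x y : 0 <= x <= y -> y <= PI / 2 -> sin x <= sin y.
Proof.
  intros. destruct (Req_dec x y) as [->|]; [lra|].
  pose proof PI_RGT_0. apply Rlt_le, sin_increasing_1; lra.
Qed.

Lemma coreL_cross p w d e : 1 <= p -> 0 <= d <= e -> 0 < e -> p * e <= PI / 2 ->
  (sh w ^ 2 + sin d ^ 2) * (sh (p * w) ^ 2 + sin (p * e) ^ 2) <=
  (sh (p * w) ^ 2 + sin (p * d) ^ 2) * (sh w ^ 2 + sin e ^ 2).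
Proof.
  intros Hp Hde He Hpe. pose proof PI_RGT_0 as HPI.
  apply (L_alg _ _ _ _ _ _ (p^2)).
  - apply pow2_ge_0.
  - apply pow2_ge_0.
  - pose proof (sin_le_mono d e ltac:(lra) ltac:(nra)).
    pose proof (sin_ge_0 d ltac:(lra) ltac:(nra)). nra.
  - assert (0 < sin e) by (apply sin_gt_0; nra). nra.
  - apply sh2_scale; auto.
  - apply sin2_scale; nra.
  - apply sin2_scale; nra.
  - apply sin2_ratio; auto.
  - apply pow2_ge_0.
  - apply pow2_ge_0.
Qed.

Lemma coreU_cross p w d e g : 1 <= p -> 0 <= d <= e -> 0 < e -> e <= g -> p * g <= PI / 2 ->
  sin (p * g) ^ 2 * (sh (p * w) ^ 2 + sin (p * d) ^ 2) * (sh w ^ 2 + sin e ^ 2) <=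
  p ^ 2 * sin g ^ 2 * (sh w ^ 2 + sin d ^ 2) * (sh (p * w) ^ 2 + sin (p * e) ^ 2).
Proof.
  intros Hp Hde He Heg Hpg. pose proof PI_RGT_0 as HPI.
  pose proof (coreL_cross p w e g Hp ltac:(lra) ltac:(lra) Hpg) as U2.
  pose proof (sin2_ratio p e g Hp ltac:(lra) ltac:(lra) Hpg) as Hcs.
  pose proof (sin2_scale p d Hp ltac:(lra) ltac:(nra)) as Hb.
  pose proof (sh2_scale p w Hp) as Ha.
  set (a := sh w ^ 2) in *. set (a' := sh (p * w) ^ 2) in *.
  set (b := sin d ^ 2) in *. set (b' := sin (p * d) ^ 2) in *.
  set (c := sin e ^ 2) in *. set (c' := sin (p * e) ^ 2) in *.
  set (S := sin g ^ 2) in *. set (S' := sin (p * g) ^ 2) in *.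
  assert (0 <= a) by apply pow2_ge_0. assert (0 <= b) by apply pow2_ge_0.
  assert (0 <= b') by apply pow2_ge_0. assert (0 <= c) by apply pow2_ge_0.
  assert (0 <= c') by apply pow2_ge_0. assert (0 <= S') by apply pow2_ge_0.
  assert (HS : 0 < S) by (unfold S; assert (0 < sin g) by (apply sin_gt_0; nra); nra).
  assert (HS' : 0 < S') by (unfold S'; assert (0 < sin (p * g)) by (apply sin_gt_0; nra); nra).
  destruct (Req_dec w 0) as [->|Hw0].
  - assert (Ea : a = 0) by (unfold a; rewrite sh0; ring).
    assert (Ea2 : a' = 0) by (unfold a'; rewrite Rmult_0_r, sh0; ring).
    rewrite Ea, Ea2.
    assert (S' * b' * c <= S' * (p^2 * b) * c).
    { apply Rmult_le_compat_r; auto. apply Rmult_le_compat_l; lra. }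
    assert (0 <= p^2 * b) by (apply Rmult_le_pos; [apply pow2_ge_0|lra]).
    assert (p^2 * b * (c * S') <= p^2 * b * (S * c')) by (apply Rmult_le_compat_l; lra).
    nra.
  - assert (Ha0 : 0 < a).
    { unfold a. rewrite sh2_abs. assert (0 < sh (Rabs w)) by (apply sh_pos; apply Rabs_pos_lt; auto). nra. }
    assert (Ha'0 : 0 < a'). { assert (1 * a <= p^2 * a) by (apply Rmult_le_compat_r; nra). lra. }
    assert (U1 : a * (a' + b') <= a' * (a + b)). { assert (a * b' <= a * (p^2 * b)) by (apply Rmult_le_compat_l; lra). assert (p^2 * a * b <= a' * b) by (apply Rmult_le_compat_r; lra). nra. }
    assert (U3 : a' * S' * (a + S) <= p^2 * a * S * (a' + S')).
    { pose proof (K3 (Rabs w) p ltac:(apply Rabs_pos_lt; auto) Hp) as K.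
      pose proof (T2 g p ltac:(lra) Hp Hpg) as T.
      rewrite <- sh2_abs in K. replace (p * Rabs w) with (Rabs (p * w)) in K
        by (rewrite Rabs_mult, (Rabs_right p) by lra; ring).
      rewrite <- sh2_abs in K. fold a a' S S' in K, T.
      assert (H10 : 1 / a + 1 / S <= p^2 / a' + p^2 / S') by lra.
      assert (Hm : 0 < a * a' * S * S') by
        exact (Rmult_lt_0_compat _ _ (Rmult_lt_0_compat _ _ (Rmult_lt_0_compat _ _ Ha0 Ha'0) HS) HS').
      apply Rmult_le_compat_r with (r := a * a' * S * S') in H10; [|lra].
      replace ((1 / a + 1 / S) * (a * a' * S * S')) with (a' * S' * (a + S)) in H10 by (field; lra).
      replace ((p ^ 2 / a' + p ^ 2 / S') * (a * a' * S * S')) with (p ^ 2 * a * S * (a' + S')) in H10 by (field; lra).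
      auto. }
    assert (Hpos : 0 < a * (a' + S')) by nra.
    apply Rmult_le_reg_r with (a * (a' + S')); auto.
    assert (L1 : S' * (a' + b') * (a + c) * (a * (a' + S')) =
                 S' * (a * (a' + b')) * ((a + c) * (a' + S'))) by ring.
    assert (S' * (a * (a' + b')) * ((a + c) * (a' + S')) <=
            S' * (a' * (a + b)) * ((a' + c') * (a + S))).
    { apply Rmult_le_compat; [apply Rmult_le_pos; [lra|apply Rmult_le_pos; lra] | apply Rmult_le_pos; lra | apply Rmult_le_compat_l; lra | lra]. }
    assert (S' * (a' * (a + b)) * ((a' + c') * (a + S)) =
            (a + b) * (a' + c') * (a' * S' * (a + S))) by ring.
    assert ((a + b) * (a' + c') * (a' * S' * (a + S)) <=
            (a + b) * (a' + c') * (p^2 * a * S * (a' + S'))).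
    { apply Rmult_le_compat_l; auto. apply Rmult_le_pos; lra. }
    assert (L4 : p ^ 2 * sin g ^ 2 * (sh w ^ 2 + sin d ^ 2) * (sh (p * w) ^ 2 + sin (p * e) ^ 2) * (a * (a' + S')) =
      (a + b) * (a' + c') * (p^2 * a * S * (a' + S'))) by (unfold a, a', b, c', S, S'; ring).
    assert (L5 : sin (p * g) ^ 2 * (sh (p * w) ^ 2 + sin (p * d) ^ 2) * (sh w ^ 2 + sin e ^ 2) * (a * (a' + S')) =
      S' * (a' + b') * (a + c) * (a * (a' + S'))) by (unfold a, a', b', c, S'; ring).
    lra.
Qed.

Definition P (r t : R) : C := (r * cos t, r * sin t).

Lemma sc2 t : sin t ^ 2 + cos t ^ 2 = 1.
Proof. pose proof (sin2_cos2 t). unfold Rsqr in H. lra. Qed.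

Lemma Cmod_P r t : 0 <= r -> Cmod (P r t) = r.
Proof.
  intros Hr. unfold Cmod, P; cbn [fst snd].
  replace ((r * cos t) ^ 2 + (r * sin t) ^ 2) with (r ^ 2)
    by (pose proof (sc2 t); nra).
  apply sqrt_pow2; auto.
Qed.

Lemma dist_P r s t u :
  Cmod (Cminus (P r t) (P s u)) = sqrt (r ^ 2 + s ^ 2 - 2 * r * s * cos (t - u)).
Proof.
  unfold Cmod, Cminus, Cplus, Copp, P; cbn [fst snd]. f_equal. rewrite cos_minus.
  pose proof (sc2 t). pose proof (sc2 u).
  transitivity (r^2 * (sin t ^ 2 + cos t ^ 2) + s^2 * (sin u ^ 2 + cos u ^ 2)
     - 2 * r * s * (cos t * cos u + sin t * sin u)); [ring|].
  rewrite H, H0. ring.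
Qed.

Lemma Arg_P r t : 0 < r -> 0 <= t <= PI -> Arg (P r t) = t.
Proof.
  intros Hr Ht. unfold Arg. rewrite Cmod_P by lra.
  destruct (Req_EM_T r 0); [lra|].
  assert (0 <= sin t) by (apply sin_ge_0; lra).
  destruct (Rle_dec 0 (Im (P r t))) as [_|Hn].
  - unfold P, Re; cbn [fst snd]. replace (r * cos t / r) with (cos t) by (field; lra).
    apply acos_cos; lra.
  - exfalso. apply Hn. unfold P, Im; cbn [fst snd]. nra.
Qed.

Lemma polar (z : C) : z <> 0%C -> z = P (Cmod z) (Arg z) /\ - PI <= Arg z <= PI.
Proof.
  intros Hz. pose proof (proj1 (Cmod_gt_0 z) Hz) as Hm.
  set (m := Cmod z) in *.
  assert (Hm2 : m ^ 2 = fst z ^ 2 + snd z ^ 2).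
  { unfold m, Cmod. apply pow2_sqrt. nra. }
  assert (Hre : Rabs (fst z) <= m) by (apply re_le_Cmod).
  assert (Hu : -1 <= fst z / m <= 1).
  { apply Rabs_le_between. rewrite Rabs_div by lra. rewrite (Rabs_right m) by lra.
    apply Rmult_le_reg_r with m; auto. unfold Rdiv. rewrite Rmult_assoc, Rinv_l by lra. lra. }
  assert (Hs : sqrt (1 - (fst z / m)²) = Rabs (snd z) / m).
  { replace (1 - (fst z / m)²) with ((Rabs (snd z) / m) ^ 2).
    - apply sqrt_pow2. apply Rmult_le_pos; [apply Rabs_pos|]. apply Rlt_le, Rinv_0_lt_compat; auto.
    - assert (E1: (Rabs (snd z) / m) ^ 2 = Rabs (snd z) ^ 2 / m ^ 2) by (field; lra).
      rewrite E1, pow2_abs.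
      replace (snd z ^ 2) with (m ^ 2 - fst z ^ 2) by lra.
      unfold Rsqr. field. lra. }
  unfold Arg. fold m. destruct (Req_EM_T m 0); [lra|].
  pose proof (acos_bound (Re z / m)).
  destruct (Rle_dec 0 (Im z)) as [Hi|Hi].
  - split; [|lra]. destruct z as [z1 z2]. unfold P, Re, Im in *; cbn [fst snd] in *.
    rewrite cos_acos, sin_acos by auto. rewrite Hs, Rabs_right by lra.
    f_equal; field; lra.
  - split; [|lra]. destruct z as [z1 z2]. unfold P, Re, Im in *; cbn [fst snd] in *.
    rewrite cos_neg, sin_neg, cos_acos, sin_acos by auto. rewrite Hs, Rabs_left by lra.
    f_equal; field; lra.
Qed.

Definition Lf (g : R) (z : C) := fst z * sin g - snd z * cos g.

Lemma sin_pos_range t : - PI <= t <= PI -> 0 < sin t -> 0 < t < PI.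
Proof.
  intros Ht Hs. split.
  - destruct (Rle_or_lt t 0); auto.
    assert (sin t <= 0).
    { rewrite <- (Ropp_involutive t), sin_neg. assert (0 <= sin (- t)) by (apply sin_ge_0; lra). lra. }
    lra.
  - destruct (Rle_or_lt PI t); auto. assert (t = PI) by lra. subst. rewrite sin_PI in Hs. lra.
Qed.

Lemma sector_char g z : 0 < g <= PI ->
  sector g z <-> 0 < snd z /\ 0 < Lf g z.
Proof.
  intros Hg. pose proof PI_RGT_0. split.
  - intros [Hz [H1 H2]]. destruct (polar z Hz) as [Ez Hr].
    pose proof (proj1 (Cmod_gt_0 z) Hz).
    set (m := Cmod z) in *. set (t := Arg z) in *.
    rewrite Ez. unfold Lf, P; cbn [fst snd]. split.
    + assert (0 < sin t) by (apply sin_gt_0; lra). nra.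
    + assert (0 < sin (g - t)) by (apply sin_gt_0; lra). rewrite sin_minus in H3. nra.
  - intros [H1 H2].
    assert (Hz : z <> 0%C) by (intros ->; cbn in H1; lra).
    destruct (polar z Hz) as [Ez Hr]. pose proof (proj1 (Cmod_gt_0 z) Hz).
    split; auto.
    set (m := Cmod z) in *. set (t := Arg z) in *.
    rewrite Ez in H1, H2. unfold Lf, P in H1, H2; cbn [fst snd] in H1, H2.
    assert (0 < sin t) by nra.
    destruct (sin_pos_range t Hr H3) as [Ht1 Ht2].
    split; auto.
    assert (0 < sin (g - t)) by (rewrite sin_minus; nra).
    destruct (Rle_or_lt g t); auto.
    assert (sin (g - t) <= 0).
    { replace (g - t) with (- (t - g)) by ring. rewrite sin_neg.
      assert (0 <= sin (t - g)) by (apply sin_ge_0; lra). lra. }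
    lra.
Qed.

Lemma re_diff (w z : C) : Rabs (fst w - fst z) <= Cmod (Cminus w z).
Proof. pose proof (Rmax_Cmod (Cminus w z)).
  replace (fst w - fst z) with (fst (Cminus w z)) by (unfold Cminus, Cplus, Copp; cbn [fst snd]; ring).
  pose proof (Rmax_l (Rabs (fst (Cminus w z))) (Rabs (snd (Cminus w z)))). lra. Qed.
Lemma im_diff (w z : C) : Rabs (snd w - snd z) <= Cmod (Cminus w z).
Proof. pose proof (Rmax_Cmod (Cminus w z)).
  replace (snd w - snd z) with (snd (Cminus w z)) by (unfold Cminus, Cplus, Copp; cbn [fst snd]; ring).
  pose proof (Rmax_r (Rabs (fst (Cminus w z))) (Rabs (snd (Cminus w z)))). lra. Qed.

Lemma Lf_diff g (w z : C) : Rabs (Lf g w - Lf g z) <= 2 * Cmod (Cminus w z).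
Proof.
  pose proof (re_diff w z). pose proof (im_diff w z).
  unfold Lf. replace (fst w * sin g - snd w * cos g - (fst z * sin g - snd z * cos g))
    with ((fst w - fst z) * sin g + (- (snd w - snd z)) * cos g) by ring.
  eapply Rle_trans; [apply Rabs_triang|]. rewrite !Rabs_mult, Rabs_Ropp.
  pose proof (Rabs_pos (fst w - fst z)). pose proof (Rabs_pos (snd w - snd z)).
  assert (Rabs (sin g) <= 1) by (apply Rabs_le; apply SIN_bound).
  assert (Rabs (cos g) <= 1) by (apply Rabs_le; apply COS_bound).
  nra.
Qed.

Lemma boundary_lines g z : 0 < g <= PI -> boundary (sector g) z ->
  snd z = 0 \/ Lf g z = 0.
Proof.
  intros Hg Hb. destruct (Req_dec (snd z) 0) as [|H1]; [auto|].
  destruct (Req_dec (Lf g z) 0) as [|H2]; [auto|]. exfalso.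
  set (eps := Rmin (Rabs (snd z)) (Rabs (Lf g z)) / 4).
  assert (He : 0 < eps).
  { unfold eps. apply Rmin_case; pose proof (Rabs_pos_lt _ H1); pose proof (Rabs_pos_lt _ H2); lra. }
  assert (Hm1 : eps <= Rabs (snd z) / 4) by (unfold eps; pose proof (Rmin_l (Rabs (snd z)) (Rabs (Lf g z))); lra).
  assert (Hm2 : eps <= Rabs (Lf g z) / 4) by (unfold eps; pose proof (Rmin_r (Rabs (snd z)) (Rabs (Lf g z))); lra).
  destruct (Hb eps He) as [[w1 [Hw1 Hd1]] [w2 [Hw2 Hd2]]].
  pose proof (im_diff w1 z). pose proof (im_diff w2 z).
  pose proof (Lf_diff g w1 z). pose proof (Lf_diff g w2 z).
  destruct (Rlt_or_le 0 (snd z)) as [Hs|Hs]; destruct (Rlt_or_le 0 (Lf g z)) as [Hl|Hl].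
  - apply Hw2. apply sector_char; auto.
    rewrite Rabs_right in Hm1, Hm2 by lra.
    split.
    + assert (Rabs (snd w2 - snd z) < snd z) by lra. apply Rabs_def2 in H5. lra.
    + assert (Rabs (Lf g w2 - Lf g z) < Lf g z) by lra. apply Rabs_def2 in H5. lra.
  - apply sector_char in Hw1; auto. destruct Hw1 as [_ Hw1].
    assert (Lf g z < 0) by lra. rewrite Rabs_left in Hm2 by lra.
    assert (Rabs (Lf g w1 - Lf g z) < - Lf g z) by lra. apply Rabs_def2 in H6. lra.
  - apply sector_char in Hw1; auto. destruct Hw1 as [Hw1 _].
    assert (snd z < 0) by lra. rewrite Rabs_left in Hm1 by lra.
    assert (Rabs (snd w1 - snd z) < - snd z) by lra. apply Rabs_def2 in H6. lra.
  - apply sector_char in Hw1; auto. destruct Hw1 as [Hw1 _].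
    assert (snd z < 0) by lra. rewrite Rabs_left in Hm1 by lra.
    assert (Rabs (snd w1 - snd z) < - snd z) by lra. apply Rabs_def2 in H6. lra.
Qed.

Lemma Cmod_shift (a u : C) : Cmod (Cminus (fst a + fst u, snd a + snd u) a) = Cmod u.
Proof. unfold Cmod, Cminus, Cplus, Copp; cbn [fst snd]. f_equal. ring. Qed.

Lemma Cmod_perp e g : 0 <= e -> Cmod (- (e * sin g), e * cos g) = e.
Proof.
  intros He. unfold Cmod; cbn [fst snd].
  replace ((- (e * sin g)) ^ 2 + (e * cos g) ^ 2) with (e ^ 2) by (pose proof (sc2 g); nra).
  apply sqrt_pow2; auto.
Qed.

Lemma boundary_ray0 g t : 0 < g <= PI -> 0 <= t -> boundary (sector g) (P t 0).
Proof.
  intros Hg Ht eps He. pose proof PI_RGT_0.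
  set (eta := eps / 2).
  assert (Hs2 : 0 < sin (g / 2)) by (apply sin_gt_0; lra).
  assert (Hsg : 0 <= sin g) by (apply sin_ge_0; lra).
  assert (EP : P t 0 = (t, 0)) by (unfold P; rewrite cos_0, sin_0; f_equal; ring).
  split.
  - exists (fst (P t 0) + fst (P eta (g / 2)), snd (P t 0) + snd (P eta (g / 2))).
    split.
    + apply sector_char; auto. rewrite EP. unfold P, Lf; cbn [fst snd]. split.
      * unfold eta. nra.
      * assert (sin (g - g / 2) = sin (g / 2)) by (f_equal; field).
        rewrite sin_minus in H0. unfold eta. nra.
    + rewrite Cmod_shift, Cmod_P; unfold eta; lra.
  - exists (fst (P t 0) + fst (0, - eta), snd (P t 0) + snd (0, - eta)). split.
    + intros Hs. apply sector_char in Hs; auto. destruct Hs as [Hs _].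
      rewrite EP in Hs; cbn [fst snd] in Hs. unfold eta in Hs. lra.
    + rewrite Cmod_shift. unfold Cmod; cbn [fst snd].
      replace (0 ^ 2 + (- eta) ^ 2) with (eta ^ 2) by ring. rewrite sqrt_pow2; unfold eta; lra.
Qed.

Lemma boundary_rayg g t : 0 < g <= PI -> 0 <= t -> boundary (sector g) (P t g).
Proof.
  intros Hg Ht eps He. pose proof PI_RGT_0.
  set (eta := eps / 2).
  assert (Hs2 : 0 < sin (g / 2)) by (apply sin_gt_0; lra).
  assert (Hsg : 0 <= sin g) by (apply sin_ge_0; lra).
  split.
  - exists (fst (P t g) + fst (P eta (g / 2)), snd (P t g) + snd (P eta (g / 2))).
    split.
    + apply sector_char; auto. unfold P, Lf; cbn [fst snd]. split.
      * unfold eta. nra.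
      * assert (sin (g - g / 2) = sin (g / 2)) by (f_equal; field).
        rewrite sin_minus in H0. unfold eta. nra.
    + rewrite Cmod_shift, Cmod_P; unfold eta; lra.
  - exists (fst (P t g) + fst (- (eta * sin g), eta * cos g),
            snd (P t g) + snd (- (eta * sin g), eta * cos g)). split.
    + intros Hs. apply sector_char in Hs; auto. destruct Hs as [_ Hs].
      unfold P, Lf in Hs; cbn [fst snd] in Hs. pose proof (sc2 g). unfold eta in Hs. nra.
    + rewrite Cmod_shift, Cmod_perp; unfold eta; lra.
Qed.

Lemma glb_min (E : R -> Prop) D : (forall r, E r -> D <= r) -> E D -> real (Glb_Rbar E) = D.
Proof.
  intros Hlb HD. rewrite (is_glb_Rbar_unique E D); [reflexivity|]. split.
  - intros x Hx. simpl. apply Hlb; auto.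
  - intros b Hb. apply Hb; auto.
Qed.

Lemma cos_le_A A u : 0 <= A <= PI -> A <= u <= 2 * PI - A -> cos u <= cos A.
Proof.
  intros HA Hu. pose proof PI_RGT_0.
  destruct (Rle_or_lt u PI).
  - apply cos_decr_1; lra.
  - replace (cos u) with (cos (2 * PI - u)).
    + apply cos_decr_1; lra.
    + rewrite cos_minus, cos_2PI, sin_2PI. ring.
Qed.

Lemma tri3 (x z y : C) : Cmod (Cminus x y) <= Cmod (Cminus x z) + Cmod (Cminus z y).
Proof.
  replace (Cminus x y) with (Cplus (Cminus x z) (Cminus z y)).
  - apply Cmod_triangle.
  - unfold Cminus, Cplus, Copp; cbn [fst snd]. f_equal; ring.
Qed.

Definition Dst r s t := sqrt (r ^ 2 + s ^ 2 - 2 * r * s * cos t).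

Lemma D_nonneg_arg r s t : 0 <= r ^ 2 + s ^ 2 - 2 * r * s * cos t.
Proof.
  replace (r ^ 2 + s ^ 2 - 2 * r * s * cos t) with ((r - s * cos t) ^ 2 + (s * sin t) ^ 2).
  - apply Rplus_le_le_0_compat; apply pow2_ge_0.
  - transitivity (r ^ 2 + s ^ 2 * (sin t ^ 2 + cos t ^ 2) - 2 * r * s * cos t); [ring|].
    rewrite sc2. ring.
Qed.

Lemma glb_lower g r s th ph z : 0 < g <= PI -> 0 < r -> 0 < s -> 0 < th < g -> 0 < ph < g ->
  boundary (sector g) z ->
  Dst r s (Rmin (th + ph) (2 * g - th - ph)) <= Cmod (Cminus (P r th) z) + Cmod (Cminus z (P s ph)).
Proof.
  intros Hg Hr Hs Hth Hph Hb. pose proof PI_RGT_0.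
  set (A := Rmin (th + ph) (2 * g - th - ph)).
  assert (HA1 : A <= th + ph) by apply Rmin_l.
  assert (HA2 : A <= 2 * g - th - ph) by apply Rmin_r.
  assert (HA0 : 0 < A) by (unfold A; apply Rmin_case; lra).
  destruct (boundary_lines g z Hg Hb) as [Hz|Hz].
  - assert (Ez : z = P (fst z) 0).
    { destruct z as [z1 z2]. unfold P; cbn [fst snd] in *. rewrite cos_0, sin_0, Hz. f_equal; ring. }
    assert (E1 : Cmod (Cminus z (P s ph)) = Cmod (Cminus z (P s (- ph)))).
    { rewrite Ez, !dist_P. do 2 f_equal. replace (0 - - ph) with (- (0 - ph)) by ring. rewrite cos_neg. auto. }
    rewrite E1. eapply Rle_trans; [|apply tri3].
    rewrite dist_P. unfold Dst. apply sqrt_le_1_alt.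
    replace (th - - ph) with (th + ph) by ring.
    assert (cos (th + ph) <= cos A) by (apply cos_le_A; lra).
    assert (0 <= 2 * r * s) by nra.
    assert (2 * r * s * cos (th + ph) <= 2 * r * s * cos A) by (apply Rmult_le_compat_l; lra). lra.
  - set (t := fst z * cos g + snd z * sin g).
    assert (Ez : z = P t g).
    { destruct z as [z1 z2]. unfold P, t, Lf in *; cbn [fst snd] in *. f_equal.
      - rewrite <- (Rmult_1_r z1) at 1. rewrite <- (sc2 g).
        replace (z1 * (sin g ^ 2 + cos g ^ 2)) with
          ((z1 * cos g + z2 * sin g) * cos g + sin g * (z1 * sin g - z2 * cos g)) by ring.
        rewrite Hz. ring.
      - rewrite <- (Rmult_1_r z2) at 1. rewrite <- (sc2 g).
        replace (z2 * (sin g ^ 2 + cos g ^ 2)) with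
          ((z1 * cos g + z2 * sin g) * sin g - cos g * (z1 * sin g - z2 * cos g)) by ring.
        rewrite Hz. ring. }
    assert (E1 : Cmod (Cminus z (P s ph)) = Cmod (Cminus z (P s (2 * g - ph)))).
    { rewrite Ez, !dist_P. do 2 f_equal. replace (g - (2 * g - ph)) with (- (g - ph)) by ring.
      rewrite cos_neg. auto. }
    rewrite E1. eapply Rle_trans; [|apply tri3].
    rewrite dist_P. unfold Dst. apply sqrt_le_1_alt.
    replace (th - (2 * g - ph)) with (- (2 * g - th - ph)) by ring. rewrite cos_neg.
    assert (cos (2 * g - th - ph) <= cos A) by (apply cos_le_A; lra).
    assert (0 <= 2 * r * s) by nra.
    assert (2 * r * s * cos (2 * g - th - ph) <= 2 * r * s * cos A) by (apply Rmult_le_compat_l; lra). lra.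
Qed.

Lemma sqrt_k2 k Q : 0 <= k -> 0 <= Q -> sqrt (k ^ 2 * Q) = k * sqrt Q.
Proof. intros. rewrite sqrt_mult by (try apply pow2_ge_0; auto). rewrite sqrt_pow2; auto. Qed.

Lemma crossing r s th ph : 0 < r -> 0 < s -> 0 < th < PI -> 0 < ph < PI -> th + ph <= PI ->
  exists t, 0 <= t /\
    Cmod (Cminus (P r th) (P t 0)) + Cmod (Cminus (P t 0) (P s ph)) = Dst r s (th + ph).
Proof.
  intros Hr Hs Hth Hph Hsum.
  assert (Hx2 : 0 < r * sin th) by (apply Rmult_lt_0_compat; auto; apply sin_gt_0; lra).
  assert (Hy2 : 0 < s * sin ph) by (apply Rmult_lt_0_compat; auto; apply sin_gt_0; lra).
  set (x1 := r * cos th) in *. set (x2 := r * sin th) in *.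
  set (y1 := s * cos ph) in *. set (y2 := s * sin ph) in *.
  set (lam := x2 / (x2 + y2)).
  assert (Hl0 : 0 <= lam) by (unfold lam; apply Rmult_le_pos; [lra|]; apply Rlt_le, Rinv_0_lt_compat; lra).
  assert (Hl1 : 0 <= 1 - lam).
  { replace (1 - lam) with (y2 / (x2 + y2)) by (unfold lam; field; lra).
    apply Rmult_le_pos; [lra|]; apply Rlt_le, Rinv_0_lt_compat; lra. }
  exists (x1 + lam * (y1 - x1)). split.
  - replace (x1 + lam * (y1 - x1)) with (r * s * sin (th + ph) / (x2 + y2)).
    + apply Rmult_le_pos; [|apply Rlt_le, Rinv_0_lt_compat; lra].
      apply Rmult_le_pos; [nra|]. apply sin_ge_0; lra.
    + unfold lam, x1, x2, y1, y2. rewrite sin_plus. field. fold x2 y2. lra.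
  - set (Q := (x1 - y1) ^ 2 + (x2 + y2) ^ 2).
    assert (HQ : 0 <= Q) by (unfold Q; apply Rplus_le_le_0_compat; apply pow2_ge_0).
    assert (E1 : Cmod (Cminus (P r th) (P (x1 + lam * (y1 - x1)) 0)) = lam * sqrt Q).
    { rewrite <- sqrt_k2 by auto. unfold Cmod, Cminus, Cplus, Copp, P; cbn [fst snd].
      rewrite cos_0, sin_0. fold x1 x2. f_equal. unfold Q, lam. field. lra. }
    assert (E2 : Cmod (Cminus (P (x1 + lam * (y1 - x1)) 0) (P s ph)) = (1 - lam) * sqrt Q).
    { rewrite <- sqrt_k2 by auto. unfold Cmod, Cminus, Cplus, Copp, P; cbn [fst snd].
      rewrite cos_0, sin_0. fold y1 y2. f_equal. unfold Q, lam. field. lra. }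
    rewrite E1, E2.
    replace (lam * sqrt Q + (1 - lam) * sqrt Q) with (sqrt Q) by ring.
    unfold Dst. f_equal. unfold Q, x1, x2, y1, y2. rewrite cos_plus.
    pose proof (sc2 th). pose proof (sc2 ph).
    transitivity (r^2 * (sin th ^ 2 + cos th ^ 2) + s^2 * (sin ph ^ 2 + cos ph ^ 2)
     - 2 * r * s * (cos th * cos ph - sin th * sin ph)); [ring|].
    rewrite H, H0. ring.
Qed.

Lemma glb_sector g r s th ph : 0 < g <= PI -> 0 < r -> 0 < s -> 0 < th < g -> 0 < ph < g ->
  real (Glb_Rbar (fun v => exists z, boundary (sector g) z /\
      v = Cmod (Cminus (P r th) z) + Cmod (Cminus z (P s ph)))) =
  Dst r s (Rmin (th + ph) (2 * g - th - ph)).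
Proof.
  intros Hg Hr Hs Hth Hph. pose proof PI_RGT_0.
  apply glb_min.
  - intros v [z [Hz ->]]. apply glb_lower; auto.
  - destruct (Rle_or_lt (th + ph) (2 * g - th - ph)) as [Hc|Hc].
    + rewrite Rmin_left by lra.
      destruct (crossing r s th ph) as [t [Ht Et]]; try lra.
      exists (P t 0). split; [apply boundary_ray0; auto|]. auto.
    + rewrite Rmin_right by lra.
      destruct (crossing r s (g - th) (g - ph)) as [t [Ht Et]]; try lra.
      exists (P t g). split; [apply boundary_rayg; auto|].
      rewrite !dist_P.
      replace (th - g) with (- (g - th - 0)) by ring. rewrite cos_neg.
      replace (g - ph) with (- (0 - (g - ph))) at 1 by ring. rewrite cos_neg.
      replace (2 * g - th - ph) with (g - th + (g - ph)) by ring. rewrite <- Et. rewrite !dist_P. reflexivity.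
Qed.

Lemma s_formula g r s th ph : 0 < g <= PI -> 0 < r -> 0 < s -> 0 < th < g -> 0 < ph < g ->
  s_metric (sector g) (P r th) (P s ph) =
  Dst r s (th - ph) / Dst r s (Rmin (th + ph) (2 * g - th - ph)).
Proof.
  intros. unfold s_metric. rewrite glb_sector by auto. rewrite dist_P. reflexivity.
Qed.

Lemma Dst_sh r s t : 0 < r -> 0 < s ->
  r ^ 2 + s ^ 2 - 2 * r * s * cos t = 4 * r * s * (sh ((ln s - ln r) / 2) ^ 2 + sin (t / 2) ^ 2).
Proof.
  intros Hr Hs.
  replace (cos t) with (1 - 2 * sin (t / 2) * sin (t / 2)) by
    (rewrite <- cos_2a_sin; f_equal; field).
  set (u := exp ((ln s - ln r) / 2)).
  assert (Hu : 0 < u) by apply exp_pos.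
  assert (Hu2 : u * u = s / r).
  { unfold u. rewrite <- exp_plus. replace ((ln s - ln r) / 2 + (ln s - ln r) / 2) with (ln s - ln r) by field.
    unfold Rminus. rewrite exp_plus, exp_Ropp, !exp_ln by auto. field. lra. }
  assert (Hv : exp (- ((ln s - ln r) / 2)) = / u) by (unfold u; apply exp_Ropp).
  unfold sinh. rewrite Hv. fold u.
  assert (s = r * (u * u)) by (rewrite Hu2; field; lra).
  rewrite H. field. lra.
Qed.

Lemma s_Fq g r s th ph : 0 < g <= PI -> 0 < r -> 0 < s -> 0 < th < g -> 0 < ph < g ->
  s_metric (sector g) (P r th) (P s ph) =
  sqrt (Fq ((ln s - ln r) / 2) (Rabs (th - ph) / 2) (Rmin (th + ph) (2 * g - th - ph) / 2)).
Proof.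
  intros Hg Hr Hs Hth Hph. pose proof PI_RGT_0.
  rewrite s_formula by auto. unfold Dst. rewrite !Dst_sh by auto.
  set (A := Rmin (th + ph) (2 * g - th - ph)).
  assert (HA0 : 0 < A) by (unfold A; apply Rmin_case; lra).
  assert (HA1 : A <= g) by (unfold A; pose proof (Rmin_l (th + ph) (2 * g - th - ph)); pose proof (Rmin_r (th + ph) (2 * g - th - ph)); lra).
  assert (HsA : 0 < sin (A / 2)) by (apply sin_gt_0; lra).
  set (a := sh ((ln s - ln r) / 2) ^ 2).
  assert (0 <= a) by apply pow2_ge_0.
  assert (Eb : sin ((th - ph) / 2) ^ 2 = sin (Rabs (th - ph) / 2) ^ 2).
  { unfold Rabs. destruct (Rcase_abs (th - ph)); [|reflexivity].
    replace (- (th - ph) / 2) with (- ((th - ph) / 2)) by field. rewrite sin_neg. ring. }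
  rewrite Eb. unfold Fq. fold a.
  rewrite <- sqrt_div_alt.
  - f_equal. field. split; [|lra]. assert (0 < sin (A / 2) ^ 2) by (apply pow_lt; auto). lra.
  - assert (0 < sin (A / 2) ^ 2) by (apply pow_lt; auto).
    apply Rmult_lt_0_compat; [|lra]. apply Rmult_lt_0_compat; [|lra]. lra.
Qed.

Lemma pair_formula alpha beta x y : 0 < alpha <= PI -> 0 < beta <= PI ->
  sector alpha x -> sector alpha y ->
  exists w d e, 0 <= d <= e /\ 0 < e /\ e <= alpha / 2 /\
    s_metric (sector alpha) x y = sqrt (Fq w d e) /\
    s_metric (sector beta) (cpow x (beta / alpha)) (cpow y (beta / alpha)) =
      sqrt (Fq ((beta / alpha) * w) ((beta / alpha) * d) ((beta / alpha) * e)).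
Proof.
  intros Ha Hb Hx Hy. pose proof PI_RGT_0.
  set (p := beta / alpha).
  assert (Hp : 0 < p) by (unfold p; apply Rdiv_lt_0_compat; lra).
  assert (Hbp : beta = p * alpha) by (unfold p; field; lra).
  destruct Hx as [Hx0 [Hx1 Hx2]]. destruct Hy as [Hy0 [Hy1 Hy2]].
  destruct (polar x Hx0) as [Ex _]. destruct (polar y Hy0) as [Ey _].
  pose proof (proj1 (Cmod_gt_0 x) Hx0). pose proof (proj1 (Cmod_gt_0 y) Hy0).
  set (r := Cmod x) in *. set (s := Cmod y) in *.
  set (th := Arg x) in *. set (ph := Arg y) in *.
  assert (Efx : cpow x p = P (Rpower r p) (p * th)) by reflexivity.
  assert (Efy : cpow y p = P (Rpower s p) (p * ph)) by reflexivity.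
  rewrite Efx, Efy. rewrite Ex, Ey.
  exists ((ln s - ln r) / 2), (Rabs (th - ph) / 2), (Rmin (th + ph) (2 * alpha - th - ph) / 2).
  assert (Hm1 := Rmin_l (th + ph) (2 * alpha - th - ph)).
  assert (Hm2 := Rmin_r (th + ph) (2 * alpha - th - ph)).
  assert (Hm0 : 0 < Rmin (th + ph) (2 * alpha - th - ph)) by (apply Rmin_case; lra).
  assert (Hab : Rabs (th - ph) <= Rmin (th + ph) (2 * alpha - th - ph)).
  { apply Rmin_case; apply Rabs_le; lra. }
  repeat split.
  - apply Rmult_le_pos; [apply Rabs_pos|lra].
  - lra.
  - lra.
  - lra.
  - apply s_Fq; auto.
  - rewrite s_Fq; try lra.
    + f_equal. f_equal.
      * unfold Rpower. rewrite !ln_exp. field.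
      * replace (p * th - p * ph) with (p * (th - ph)) by ring.
        rewrite Rabs_mult, (Rabs_right p) by lra. field.
      * rewrite Hbp. replace (p * th + p * ph) with (p * (th + ph)) by ring.
        replace (2 * (p * alpha) - p * th - p * ph) with (p * (2 * alpha - th - ph)) by ring.
        rewrite <- Rmult_min_distr_l by lra. field.
    + unfold Rpower; apply exp_pos.
    + unfold Rpower; apply exp_pos.
    + split; [nra|]. rewrite Hbp. nra.
    + split; [nra|]. rewrite Hbp. nra.
Qed.

Lemma frac_le a b c d : 0 < b -> 0 < d -> a * d <= c * b -> a / b <= c / d.
Proof.
  intros Hb Hd H. replace (a / b) with ((a * d) / (b * d)) by (field; lra).
  replace (c / d) with ((c * b) / (b * d)) by (field; lra).
  apply Rmult_le_compat_r; auto. apply Rlt_le, Rinv_0_lt_compat; nra.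
Qed.

Lemma Fq_nonneg w d e : 0 < sin e -> 0 <= Fq w d e.
Proof.
  intros. unfold Fq. apply Rmult_le_pos.
  - apply Rplus_le_le_0_compat; apply pow2_ge_0.
  - apply Rlt_le, Rinv_0_lt_compat. assert (0 < sin e ^ 2) by (apply pow_lt; auto).
    pose proof (pow2_ge_0 (sh w)). lra.
Qed.

Lemma mainA p w d e g : 1 <= p -> 0 <= d <= e -> 0 < e -> e <= g -> p * g <= PI / 2 ->
  sqrt (Fq w d e) <= sqrt (Fq (p * w) (p * d) (p * e)) /\
  sqrt (Fq (p * w) (p * d) (p * e)) <= (p * sin g / sin (p * g)) * sqrt (Fq w d e).
Proof.
  intros Hp Hde He Heg Hpg. pose proof PI_RGT_0.
  assert (Hse : 0 < sin e) by (apply sin_gt_0; nra).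
  assert (Hspe : 0 < sin (p * e)) by (apply sin_gt_0; nra).
  assert (Hsg : 0 < sin g) by (apply sin_gt_0; nra).
  assert (Hspg : 0 < sin (p * g)) by (apply sin_gt_0; nra).
  assert (D1 : 0 < sh w ^ 2 + sin e ^ 2) by (pose proof (pow2_ge_0 (sh w)); pose proof (pow_lt _ 2 Hse); lra).
  assert (D2 : 0 < sh (p * w) ^ 2 + sin (p * e) ^ 2) by (pose proof (pow2_ge_0 (sh (p * w))); pose proof (pow_lt _ 2 Hspe); lra).
  split.
  - apply sqrt_le_1_alt. unfold Fq. apply frac_le; auto.
    apply coreL_cross; auto. nra.
  - set (K := p * sin g / sin (p * g)).
    assert (HK : 0 <= K) by (unfold K; apply Rmult_le_pos; [nra|]; apply Rlt_le, Rinv_0_lt_compat; auto).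
    rewrite <- (sqrt_pow2 K) by auto. rewrite <- sqrt_mult_alt by (apply pow2_ge_0).
    apply sqrt_le_1_alt.
    replace (K ^ 2 * Fq w d e) with ((p ^ 2 * sin g ^ 2 * (sh w ^ 2 + sin d ^ 2)) /
         (sin (p * g) ^ 2 * (sh w ^ 2 + sin e ^ 2))) by (unfold K, Fq; field; lra).
    unfold Fq. apply frac_le; auto.
    + apply Rmult_lt_0_compat; auto. apply pow_lt; auto.
    + pose proof (coreU_cross p w d e g Hp Hde He Heg Hpg). nra.
Qed.

Lemma mainB p w d e g : 0 < p <= 1 -> 0 <= d <= e -> 0 < e -> e <= g -> g <= PI / 2 ->
  (p * sin g / sin (p * g)) * sqrt (Fq w d e) <= sqrt (Fq (p * w) (p * d) (p * e)) /\
  sqrt (Fq (p * w) (p * d) (p * e)) <= sqrt (Fq w d e).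
Proof.
  intros Hp Hde He Heg Hg. pose proof PI_RGT_0.
  set (q := / p).
  assert (Hq : 1 <= q) by (unfold q; rewrite <- Rinv_1; apply Rinv_le_contravar; lra).
  assert (Hqp : q * p = 1) by (unfold q; field; lra).
  destruct (mainA q (p * w) (p * d) (p * e) (p * g) Hq ltac:(split; nra) ltac:(nra) ltac:(nra)
     ltac:(replace (q * (p * g)) with g by (rewrite <- Rmult_assoc, Hqp; ring); lra)) as [A1 A2].
  replace (q * (p * w)) with w in A1, A2 by (rewrite <- Rmult_assoc, Hqp; ring).
  replace (q * (p * d)) with d in A1, A2 by (rewrite <- Rmult_assoc, Hqp; ring).
  replace (q * (p * e)) with e in A1, A2 by (rewrite <- Rmult_assoc, Hqp; ring).
  replace (q * (p * g)) with g in A2 by (rewrite <- Rmult_assoc, Hqp; ring).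
  split; auto.
  assert (Hsg : 0 < sin g) by (apply sin_gt_0; nra).
  assert (Hspg : 0 < sin (p * g)) by (apply sin_gt_0; nra).
  assert (HK : 0 < p * sin g / sin (p * g)) by (apply Rdiv_lt_0_compat; nra).
  apply Rmult_le_compat_l with (r := p * sin g / sin (p * g)) in A2; [|lra].
  replace (p * sin g / sin (p * g) * (q * sin (p * g) / sin g * sqrt (Fq (p * w) (p * d) (p * e))))
    with (sqrt (Fq (p * w) (p * d) (p * e))) in A2 by (unfold q; field; lra).
  auto.
Qed.

Lemma cos_lb2 x : 0 <= x -> 1 - x ^ 2 / 2 <= cos x.
Proof.
  intros Hx.
  assert (H : (fun t => cos t - 1 + t ^ 2 / 2) 0 <= (fun t => cos t - 1 + t ^ 2 / 2) x).
  { apply (mono (fun t => cos t - 1 + t ^ 2 / 2) (fun t => t - sin t) 0 x); auto.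
    - intros t _. auto_derive; auto. field.
    - intros t Ht. pose proof (sin_le_x t ltac:(lra)). lra. }
  cbv beta in H. rewrite cos_0 in H. lra.
Qed.

Lemma sin_lb3 x : 0 <= x -> x - x ^ 3 / 6 <= sin x.
Proof.
  intros Hx.
  assert (H : (fun t => sin t - t + t ^ 3 / 6) 0 <= (fun t => sin t - t + t ^ 3 / 6) x).
  { apply (mono (fun t => sin t - t + t ^ 3 / 6) (fun t => cos t - 1 + t ^ 2 / 2) 0 x); auto.
    - intros t _. auto_derive; auto. field.
    - intros t Ht. pose proof (cos_lb2 t ltac:(lra)). lra. }
  cbv beta in H. rewrite sin_0 in H. lra.
Qed.

Lemma sqrt_Fq0 d e : 0 <= sin d -> 0 < sin e -> sqrt (Fq 0 d e) = sin d / sin e.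
Proof.
  intros. unfold Fq. rewrite sh0. replace ((0:R) ^ 2) with 0 by ring.
  rewrite !Rplus_0_l. replace (sin d ^ 2 / sin e ^ 2) with ((sin d / sin e) ^ 2) by (field; lra).
  apply sqrt_pow2. apply Rmult_le_pos; auto. apply Rlt_le, Rinv_0_lt_compat; auto.
Qed.

Lemma sharp1F p M c : 1 <= p -> 0 < M -> p * M <= PI / 2 -> 1 < c ->
  exists eps, 0 < eps <= M /\
    sqrt (Fq 0 (p * (eps / 2)) (p * eps)) < c * sqrt (Fq 0 (eps / 2) eps).
Proof.
  intros Hp HM HpM Hc. pose proof PI_RGT_0.
  set (eta := 1 - / c).
  assert (Heta : 0 < eta < 1).
  { unfold eta. assert (0 < / c < 1). { split. apply Rinv_0_lt_compat; lra.
      rewrite <- Rinv_1. apply Rinv_lt_contravar; lra. } lra. }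
  set (eps := Rmin M (eta / p)).
  assert (He0 : 0 < eps) by (unfold eps; apply Rmin_case; [lra|apply Rdiv_lt_0_compat; lra]).
  assert (He1 : eps <= M) by apply Rmin_l.
  assert (He2 : eps <= eta / p) by apply Rmin_r.
  assert (Hpe : p * eps <= eta) by (apply Rmult_le_reg_l with (/ p); [apply Rinv_0_lt_compat; lra|];
    replace (/ p * (p * eps)) with eps by (field; lra); unfold Rdiv in He2; lra).
  exists eps. split; [lra|].
  assert (HM2 : M <= PI / 2) by nra.
  assert (HpeM : p * eps <= p * M) by (apply Rmult_le_compat_l; lra).
  assert (S1 : 0 < sin (eps / 2)) by (apply sin_gt_0; lra).
  assert (S2 : 0 < sin eps) by (apply sin_gt_0; nra).
  assert (S3 : 0 < sin (p * (eps / 2))) by (apply sin_gt_0; nra).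
  assert (S4 : 0 < sin (p * eps)) by (apply sin_gt_0; nra).
  rewrite !sqrt_Fq0 by lra.
  pose proof (T5 p (eps / 2) Hp ltac:(lra) ltac:(nra)) as T.
  pose proof (sin_lb3 (p * eps) ltac:(nra)) as L.
  pose proof (sin_le_x eps ltac:(lra)) as U.
  assert (K1 : p * sin eps < c * sin (p * eps)).
  { assert (p * eps * (1 - eta) < sin (p * eps)).
    { assert ((p * eps) ^ 2 <= eta ^ 2) by (apply pow_incr; nra).
      assert (X2 : (p * eps) ^ 2 <= eta) by nra.
      assert (X0 : 0 < p * eps) by nra.
      assert ((p * eps) * (p * eps) ^ 2 <= (p * eps) * eta) by (apply Rmult_le_compat_l; lra).
      replace ((p * eps) ^ 3) with ((p * eps) * (p * eps) ^ 2) in L by ring.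
      assert (p * eps * eta > 0) by nra.
      lra. }
    assert (c * (1 - eta) = 1) by (unfold eta; field; lra).
    assert (p * sin eps <= p * eps) by nra.
    nra. }
  apply Rmult_lt_reg_r with (sin (p * eps) * sin eps); [nra|].
  replace (sin (p * (eps / 2)) / sin (p * eps) * (sin (p * eps) * sin eps))
    with (sin (p * (eps / 2)) * sin eps) by (field; lra).
  replace (c * (sin (eps / 2) / sin eps) * (sin (p * eps) * sin eps))
    with (sin (eps / 2) * (c * sin (p * eps))) by (field; lra).
  assert (sin (p * (eps / 2)) * sin eps <= p * sin (eps / 2) * sin eps) by (apply Rmult_le_compat_r; lra).
  assert (sin (eps / 2) * (p * sin eps) < sin (eps / 2) * (c * sin (p * eps))) by (apply Rmult_lt_compat_l; lra).
  lra.
Qed.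

Lemma sharp4F p M c : 0 < p <= 1 -> 0 < M <= PI / 2 -> c < 1 ->
  exists eps, 0 < eps <= M /\
    c * sqrt (Fq 0 (eps / 2) eps) < sqrt (Fq 0 (p * (eps / 2)) (p * eps)).
Proof.
  intros Hp HM Hc. pose proof PI_RGT_0.
  set (eta := 1 - Rmax c 0).
  assert (Heta : 0 < eta <= 1).
  { unfold eta. pose proof (Rmax_r c 0). pose proof (Rmax_lub_lt c 0 1 Hc ltac:(lra)). lra. }
  assert (Hce : c <= 1 - eta) by (unfold eta; pose proof (Rmax_l c 0); lra).
  set (eps := Rmin M eta).
  assert (He0 : 0 < eps) by (unfold eps; apply Rmin_case; lra).
  assert (He1 : eps <= M) by apply Rmin_l.
  assert (He2 : eps <= eta) by apply Rmin_r.
  exists eps. split; [lra|].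
  assert (Hpe : p * eps <= eps) by nra.
  assert (S1 : 0 < sin (eps / 2)) by (apply sin_gt_0; lra).
  assert (S2 : 0 < sin eps) by (apply sin_gt_0; nra).
  assert (S3 : 0 < sin (p * (eps / 2))) by (apply sin_gt_0; nra).
  assert (S4 : 0 < sin (p * eps)) by (apply sin_gt_0; nra).
  rewrite !sqrt_Fq0 by lra.
  pose proof (sin_lb3 eps ltac:(lra)) as L.
  pose proof (sin_le_x (p * eps) ltac:(nra)) as U.
  set (q := / p).
  assert (Hqp : q * p = 1) by (unfold q; field; lra).
  assert (Hq : 1 <= q) by (unfold q; rewrite <- Rinv_1; apply Rinv_le_contravar; lra).
  pose proof (T5 q (p * (eps / 2)) Hq ltac:(nra) ltac:(rewrite <- Rmult_assoc, Hqp; lra)) as T.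
  rewrite <- Rmult_assoc, Hqp, Rmult_1_l in T.
  assert (K1 : (1 - eta) * eps < sin eps).
  { assert (X2 : eps ^ 2 <= eta) by nra.
    assert (eps * eps ^ 2 <= eps * eta) by (apply Rmult_le_compat_l; lra).
    replace (eps ^ 3) with (eps * eps ^ 2) in L by ring.
    assert (eps * eta > 0) by nra. lra. }
  apply Rmult_lt_reg_r with (sin (p * eps) * sin eps); [nra|].
  replace (sin (p * (eps / 2)) / sin (p * eps) * (sin (p * eps) * sin eps))
    with (sin (p * (eps / 2)) * sin eps) by (field; lra).
  replace (c * (sin (eps / 2) / sin eps) * (sin (p * eps) * sin eps))
    with (c * (sin (eps / 2) * sin (p * eps))) by (field; lra).
  assert (A1 : sin (eps / 2) * sin (p * eps) <= q * sin (p * (eps / 2)) * (p * eps)).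
  { apply Rmult_le_compat; try lra. }
  replace (q * sin (p * (eps / 2)) * (p * eps)) with (sin (p * (eps / 2)) * eps) in A1
    by (replace (q * sin (p * (eps / 2)) * (p * eps)) with ((q * p) * sin (p * (eps / 2)) * eps) by ring;
        rewrite Hqp; ring).
  assert (A2 : sin (p * (eps / 2)) * ((1 - eta) * eps) < sin (p * (eps / 2)) * sin eps)
    by (apply Rmult_lt_compat_l; lra).
  destruct (Rle_or_lt c 0) as [Hc0|Hc0].
  - assert (0 <= sin (eps / 2) * sin (p * eps)) by nra.
    assert (c * (sin (eps / 2) * sin (p * eps)) <= 0) by nra.
    assert (0 < sin (p * (eps / 2)) * sin eps) by nra. lra.
  - assert (c * (sin (eps / 2) * sin (p * eps)) <= c * (sin (p * (eps / 2)) * eps))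
      by (apply Rmult_le_compat_l; lra).
    assert (c * (sin (p * (eps / 2)) * eps) <= (1 - eta) * (sin (p * (eps / 2)) * eps))
      by (apply Rmult_le_compat_r; nra).
    lra.
Qed.

Lemma frac_lt a b c d : 0 < b -> 0 < d -> a * d < c * b -> a / b < c / d.
Proof.
  intros Hb Hd H. replace (a / b) with ((a * d) / (b * d)) by (field; lra).
  replace (c / d) with ((c * b) / (b * d)) by (field; lra).
  apply Rmult_lt_compat_r; auto. apply Rinv_0_lt_compat; nra.
Qed.

Lemma Fq_d0 w g : Fq w 0 g = sh w ^ 2 / (sh w ^ 2 + sin g ^ 2).
Proof. unfold Fq. rewrite sin_0. f_equal. ring. Qed.

Lemma sqrt_lt_c c X Y : 0 <= X -> 0 <= Y -> 0 < c -> c ^ 2 * X < Y -> c * sqrt X < sqrt Y.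
Proof.
  intros. rewrite <- (sqrt_pow2 c) by lra. rewrite <- sqrt_mult_alt by (apply pow2_ge_0).
  apply sqrt_lt_1_alt. split; auto. apply Rmult_le_pos; auto. apply pow2_ge_0.
Qed.

Lemma sharp2F p g c : 1 <= p -> 0 < g -> p * g <= PI / 2 -> c < p * sin g / sin (p * g) ->
  exists mu, 0 < mu /\ forall w, 0 < w -> sh w ^ 2 < mu ->
    c * sqrt (Fq w 0 g) < sqrt (Fq (p * w) 0 (p * g)).
Proof.
  intros Hp Hg Hpg Hc. pose proof PI_RGT_0.
  assert (Hsg : 0 < sin g) by (apply sin_gt_0; nra).
  assert (Hspg : 0 < sin (p * g)) by (apply sin_gt_0; nra).
  set (S := sin g ^ 2). set (S' := sin (p * g) ^ 2).
  assert (HS : 0 < S) by (apply pow_lt; auto). assert (HS' : 0 < S') by (apply pow_lt; auto).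
  destruct (Rle_or_lt c 0) as [Hc0|Hc0].
  - exists 1. split; [lra|]. intros w Hw _.
    assert (0 < sh (p * w)) by (apply sh_pos; nra).
    rewrite !Fq_d0.
    assert (0 < sqrt (sh (p * w) ^ 2 / (sh (p * w) ^ 2 + sin (p * g) ^ 2))).
    { apply sqrt_lt_R0. pose proof (pow_lt _ 2 H0). pose proof (pow_lt _ 2 Hspg).
      apply Rdiv_lt_0_compat; lra. }
    pose proof (sqrt_pos (sh w ^ 2 / (sh w ^ 2 + sin g ^ 2))). nra.
  - set (Del := p ^ 2 * S - c ^ 2 * S').
    assert (HD : 0 < Del).
    { unfold Del. assert (c * sin (p * g) < p * sin g).
      { apply Rmult_lt_reg_r with (/ sin (p * g)); [apply Rinv_0_lt_compat; auto|].
        replace (c * sin (p * g) * / sin (p * g)) with c by (field; lra). auto. }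
      unfold S, S'. assert (0 < c * sin (p * g)) by nra. nra. }
    set (mu := Rmin (S / (c ^ 2 + 1)) (Del / (p ^ 2 * c ^ 2 + 1))).
    assert (Hmu1 : mu <= S / (c ^ 2 + 1)) by apply Rmin_l.
    assert (Hmu2 : mu <= Del / (p ^ 2 * c ^ 2 + 1)) by apply Rmin_r.
    assert (Hc2 : 0 < c ^ 2 + 1) by (pose proof (pow2_ge_0 c); lra).
    assert (Hpc2 : 0 < p ^ 2 * c ^ 2 + 1) by (pose proof (pow2_ge_0 (p * c)); rewrite Rpow_mult_distr in H0; lra).
    exists mu. split.
    { unfold mu. apply Rmin_case; apply Rdiv_lt_0_compat; auto. }
    intros w Hw Ha.
    pose proof (sh2_scale p w Hp) as Hsc.
    set (a := sh w ^ 2) in *. set (a' := sh (p * w) ^ 2) in *.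
    assert (Ha0 : 0 < a) by (unfold a; apply pow_lt; apply sh_pos; auto).
    assert (Ha'0 : 0 < a') by (assert (0 < p ^ 2 * a) by (apply Rmult_lt_0_compat; [apply pow_lt|]; lra); lra).
    rewrite !Fq_d0. fold a a' S S'.
    apply sqrt_lt_c; auto.
    + apply Rlt_le, Rdiv_lt_0_compat; lra.
    + apply Rlt_le, Rdiv_lt_0_compat; lra.
    + assert (A1 : a * (c ^ 2 + 1) < S).
      { apply Rmult_lt_reg_r with (/ (c ^ 2 + 1)); [apply Rinv_0_lt_compat; lra|].
        replace (a * (c ^ 2 + 1) * / (c ^ 2 + 1)) with a by (field; lra). unfold Rdiv in Hmu1. lra. }
      assert (A2 : a * (p ^ 2 * c ^ 2 + 1) < Del).
      { apply Rmult_lt_reg_r with (/ (p ^ 2 * c ^ 2 + 1)); [apply Rinv_0_lt_compat; lra|].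
        replace (a * (p ^ 2 * c ^ 2 + 1) * / (p ^ 2 * c ^ 2 + 1)) with a by (field; lra). unfold Rdiv in Hmu2. lra. }
      set (X := a * (1 - c ^ 2) + S).
      assert (HX : 0 < X) by (unfold X; nra).
      assert (B1 : p ^ 2 * a * X <= a' * X) by (apply Rmult_le_compat_r; lra).
      assert (B2 : c ^ 2 * a * (a' + S') < a' * (a + S)).
      { assert (a' * (a + S) - c ^ 2 * a * (a' + S') = a' * X - c ^ 2 * a * S') by (unfold X; ring).
        assert (p ^ 2 * a * X - c ^ 2 * a * S' = a * (p ^ 2 * a * (1 - c ^ 2) + Del)) by (unfold X, Del; ring).
        assert (0 < p ^ 2 * a * (1 - c ^ 2) + Del).
        { assert (p ^ 2 * a * (1 - c ^ 2) + Del = p ^ 2 * a + (Del - a * (p ^ 2 * c ^ 2))) by ring.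
          assert (0 <= p ^ 2 * a) by (apply Rmult_le_pos; [apply pow2_ge_0|lra]). lra. }
        assert (0 < a * (p ^ 2 * a * (1 - c ^ 2) + Del)) by (apply Rmult_lt_0_compat; lra).
        lra. }
      replace (c ^ 2 * (a / (a + S))) with ((c ^ 2 * a) / (a + S)) by (field; lra).
      apply frac_lt; lra.
Qed.

Lemma sharp3F p g c : 0 < p <= 1 -> 0 < g <= PI / 2 -> p * sin g / sin (p * g) < c ->
  exists mu, 0 < mu /\ forall w, 0 < w -> sh w ^ 2 < mu ->
    sqrt (Fq (p * w) 0 (p * g)) < c * sqrt (Fq w 0 g).
Proof.
  intros Hp Hg Hc. pose proof PI_RGT_0.
  assert (Hsg : 0 < sin g) by (apply sin_gt_0; nra).
  assert (Hspg : 0 < sin (p * g)) by (apply sin_gt_0; nra).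
  assert (HK : 0 < p * sin g / sin (p * g)) by (apply Rdiv_lt_0_compat; nra).
  set (S := sin g ^ 2). set (S' := sin (p * g) ^ 2).
  assert (HS : 0 < S) by (apply pow_lt; auto). assert (HS' : 0 < S') by (apply pow_lt; auto).
  set (Del := c ^ 2 * S' - p ^ 2 * S).
  assert (HD : 0 < Del).
  { unfold Del. assert (p * sin g < c * sin (p * g)).
    { apply Rmult_lt_reg_r with (/ sin (p * g)); [apply Rinv_0_lt_compat; auto|].
      replace (c * sin (p * g) * / sin (p * g)) with c by (field; lra). auto. }
    unfold S, S'. assert (0 < p * sin g) by nra. nra. }
  set (mu := Del / (p ^ 2 + 1)).
  assert (Hp2 : 0 < p ^ 2 + 1) by (pose proof (pow2_ge_0 p); lra).
  exists mu. split; [apply Rdiv_lt_0_compat; auto|].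
  intros w Hw Ha.
  set (q := / p).
  assert (Hqp : q * p = 1) by (unfold q; field; lra).
  assert (Hq : 1 <= q) by (unfold q; rewrite <- Rinv_1; apply Rinv_le_contravar; lra).
  pose proof (sh2_scale q (p * w) Hq) as Hsc.
  rewrite <- Rmult_assoc, Hqp, Rmult_1_l in Hsc.
  set (a := sh w ^ 2) in *. set (a' := sh (p * w) ^ 2) in *.
  assert (Ha0 : 0 < a) by (unfold a; apply pow_lt; apply sh_pos; auto).
  assert (Ha'0 : 0 <= a') by apply pow2_ge_0.
  assert (Hsc2 : a' <= p ^ 2 * a).
  { replace a' with (p ^ 2 * (q ^ 2 * a')) by (replace (p ^ 2 * (q ^ 2 * a')) with ((q * p) ^ 2 * a') by ring;
      rewrite Hqp; ring).
    apply Rmult_le_compat_l; [apply pow2_ge_0|lra]. }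
  assert (A1 : a * (p ^ 2 + 1) < Del).
  { apply Rmult_lt_reg_r with (/ (p ^ 2 + 1)); [apply Rinv_0_lt_compat; lra|].
    replace (a * (p ^ 2 + 1) * / (p ^ 2 + 1)) with a by (field; lra). unfold mu, Rdiv in Ha. lra. }
  rewrite !Fq_d0. fold a a' S S'.
  assert (Hc0 : 0 < c) by lra.
  rewrite <- (sqrt_pow2 c) by lra. rewrite <- sqrt_mult_alt by (apply pow2_ge_0).
  apply sqrt_lt_1_alt. split; [apply Rmult_le_pos; [lra|apply Rlt_le, Rinv_0_lt_compat; lra]|].
  replace (c ^ 2 * (a / (a + S))) with ((c ^ 2 * a) / (a + S)) by (field; lra).
  apply frac_lt; try lra.
  assert (B1 : a' * (a + S) * (p ^ 2 * a + S') <= p ^ 2 * a * (a + S) * (a' + S')).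
  { assert (a' * S' <= p ^ 2 * a * S') by (apply Rmult_le_compat_r; lra).
    assert (0 <= a + S) by lra. nra. }
  assert (B2 : p ^ 2 * a * (a + S) < c ^ 2 * a * (p ^ 2 * a + S')).
  { assert (c ^ 2 * a * (p ^ 2 * a + S') - p ^ 2 * a * (a + S) = a * (Del - p ^ 2 * a * (1 - c ^ 2))) by (unfold Del; ring).
    assert (p ^ 2 * a * (1 - c ^ 2) <= p ^ 2 * a).
    { assert (0 <= p ^ 2 * a * c ^ 2) by (apply Rmult_le_pos; [apply Rmult_le_pos; [apply pow2_ge_0|lra]|apply pow2_ge_0]). nra. }
    assert (0 < a * (Del - p ^ 2 * a * (1 - c ^ 2))) by (apply Rmult_lt_0_compat; nra).
    lra. }
  assert (Hpos : 0 < p ^ 2 * a + S') by (assert (0 <= p ^ 2 * a) by (apply Rmult_le_pos; [apply pow2_ge_0|lra]); lra).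
  apply Rmult_lt_reg_r with (p ^ 2 * a + S'); auto.
  assert (B3 : p ^ 2 * a * (a + S) * (a' + S') < c ^ 2 * a * (p ^ 2 * a + S') * (a' + S')).
  { apply Rmult_lt_compat_r; lra. }
  nra.
Qed.

Lemma cpow_P r th p : 0 < r -> 0 <= th <= PI -> cpow (P r th) p = P (Rpower r p) (p * th).
Proof. intros. unfold cpow. rewrite Cmod_P, Arg_P by lra. reflexivity. Qed.

Lemma pair_P alpha beta r s th ph : 0 < alpha <= PI -> 0 < beta <= PI -> 0 < r -> 0 < s ->
  0 < th < alpha -> 0 < ph < alpha ->
  s_metric (sector alpha) (P r th) (P s ph) =
    sqrt (Fq ((ln s - ln r) / 2) (Rabs (th - ph) / 2) (Rmin (th + ph) (2 * alpha - th - ph) / 2)) /\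
  s_metric (sector beta) (cpow (P r th) (beta / alpha)) (cpow (P s ph) (beta / alpha)) =
    sqrt (Fq ((beta / alpha) * ((ln s - ln r) / 2)) ((beta / alpha) * (Rabs (th - ph) / 2))
             ((beta / alpha) * (Rmin (th + ph) (2 * alpha - th - ph) / 2))).
Proof.
  intros Ha Hb Hr Hs Hth Hph. pose proof PI_RGT_0.
  set (p := beta / alpha).
  assert (Hp : 0 < p) by (unfold p; apply Rdiv_lt_0_compat; lra).
  assert (Hbp : beta = p * alpha) by (unfold p; field; lra).
  split; [apply s_Fq; auto|].
  rewrite !cpow_P by lra.
  rewrite s_Fq; try lra.
  - f_equal. f_equal.
    + unfold Rpower. rewrite !ln_exp. field.
    + replace (p * th - p * ph) with (p * (th - ph)) by ring.
      rewrite Rabs_mult, (Rabs_right p) by lra. field.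
    + rewrite Hbp. replace (p * th + p * ph) with (p * (th + ph)) by ring.
      replace (2 * (p * alpha) - p * th - p * ph) with (p * (2 * alpha - th - ph)) by ring.
      rewrite <- Rmult_min_distr_l by lra. field.
  - unfold Rpower; apply exp_pos.
  - unfold Rpower; apply exp_pos.
  - split; [nra|]. rewrite Hbp. nra.
  - split; [nra|]. rewrite Hbp. nra.
Qed.

Lemma sector_P g r th : 0 < g <= PI -> 0 < r -> 0 < th < g -> sector g (P r th).
Proof.
  intros. unfold sector. rewrite Arg_P by lra. split; [|lra].
  intros E. assert (Cmod (P r th) = 0) by (rewrite E; apply Cmod_0). rewrite Cmod_P in H2; lra.
Qed.

Lemma P_neq_angle r th ph : 0 < r -> 0 <= th <= PI -> 0 <= ph <= PI -> th <> ph -> P r th <> P r ph.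
Proof. intros Hr H1 H2 Hne E. apply Hne. rewrite <- (Arg_P r th), <- (Arg_P r ph) by auto. rewrite E; auto. Qed.

Lemma P_neq_mod r s th : 0 <= r -> 0 <= s -> r <> s -> P r th <> P s th.
Proof. intros Hr Hs Hne E. apply Hne. rewrite <- (Cmod_P r th), <- (Cmod_P s th) by auto. rewrite E; auto. Qed.

Lemma sh_ln_t t : 1 < t -> sh ((ln t - ln 1) / 2) ^ 2 = (t - 1) ^ 2 / (4 * t) /\ 0 < (ln t - ln 1) / 2.
Proof.
  intros Ht. split.
  - pose proof (Dst_sh 1 t 0 ltac:(lra) ltac:(lra)). rewrite cos_0 in H.
    replace (0 / 2) with 0 in H by field. rewrite sin_0 in H.
    apply Rmult_eq_reg_r with (4 * t); [|lra].
    replace ((t - 1) ^ 2 / (4 * t) * (4 * t)) with ((t - 1) ^ 2) by (field; lra).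
    replace ((t - 1) ^ 2) with (1 ^ 2 + t ^ 2 - 2 * 1 * t * 1) by ring. rewrite H. ring.
  - rewrite ln_1. pose proof (ln_increasing 1 t ltac:(lra) Ht). rewrite ln_1 in H. lra.
Qed.

Lemma small_t mu : 0 < mu -> exists t, 1 < t /\ (t - 1) ^ 2 / (4 * t) < mu.
Proof.
  intros Hmu. set (eta := Rmin 1 mu).
  assert (H0 : 0 < eta) by (unfold eta; apply Rmin_case; lra).
  assert (H1 : eta <= 1) by apply Rmin_l. assert (H2 : eta <= mu) by apply Rmin_r.
  exists (1 + eta). split; [lra|].
  replace (1 + eta - 1) with eta by ring.
  assert (eta ^ 2 / (4 * (1 + eta)) <= eta / 4).
  { apply Rmult_le_reg_r with (4 * (1 + eta)); [lra|].
    replace (eta ^ 2 / (4 * (1 + eta)) * (4 * (1 + eta))) with (eta ^ 2) by (field; lra).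
    nra. }
  lra.
Qed.

Lemma angle_family alpha beta eps : 0 < alpha <= PI -> 0 < beta <= PI -> 0 < eps <= alpha / 2 ->
  sector alpha (P 1 (eps / 2)) /\ sector alpha (P 1 (3 * eps / 2)) /\ P 1 (eps / 2) <> P 1 (3 * eps / 2) /\
  s_metric (sector alpha) (P 1 (eps / 2)) (P 1 (3 * eps / 2)) = sqrt (Fq 0 (eps / 2) eps) /\
  s_metric (sector beta) (cpow (P 1 (eps / 2)) (beta / alpha)) (cpow (P 1 (3 * eps / 2)) (beta / alpha)) =
    sqrt (Fq 0 ((beta / alpha) * (eps / 2)) ((beta / alpha) * eps)).
Proof.
  intros Ha Hb He.
  destruct (pair_P alpha beta 1 1 (eps / 2) (3 * eps / 2) Ha Hb ltac:(lra) ltac:(lra) ltac:(lra) ltac:(lra)) as [E1 E2].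
  assert (Ew : (ln 1 - ln 1) / 2 = 0) by field.
  assert (Ed : Rabs (eps / 2 - 3 * eps / 2) / 2 = eps / 2).
  { replace (eps / 2 - 3 * eps / 2) with (- eps) by field. rewrite Rabs_Ropp, Rabs_right by lra. field. }
  assert (Ee : Rmin (eps / 2 + 3 * eps / 2) (2 * alpha - eps / 2 - 3 * eps / 2) / 2 = eps).
  { rewrite Rmin_left by lra. field. }
  rewrite Ew, Ed, Ee in E1, E2. rewrite Rmult_0_r in E2.
  split; [apply sector_P; lra|]. split; [apply sector_P; lra|].
  split; [apply P_neq_angle; lra|]. split; auto.
Qed.

Lemma bisector_family alpha beta t : 0 < alpha <= PI -> 0 < beta <= PI -> 1 < t ->
  sector alpha (P 1 (alpha / 2)) /\ sector alpha (P t (alpha / 2)) /\ P 1 (alpha / 2) <> P t (alpha / 2) /\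
  s_metric (sector alpha) (P 1 (alpha / 2)) (P t (alpha / 2)) = sqrt (Fq ((ln t - ln 1) / 2) 0 (alpha / 2)) /\
  s_metric (sector beta) (cpow (P 1 (alpha / 2)) (beta / alpha)) (cpow (P t (alpha / 2)) (beta / alpha)) =
    sqrt (Fq ((beta / alpha) * ((ln t - ln 1) / 2)) 0 ((beta / alpha) * (alpha / 2))).
Proof.
  intros Ha Hb Ht.
  destruct (pair_P alpha beta 1 t (alpha / 2) (alpha / 2) Ha Hb ltac:(lra) ltac:(lra) ltac:(lra) ltac:(lra)) as [E1 E2].
  assert (Ed : Rabs (alpha / 2 - alpha / 2) / 2 = 0).
  { replace (alpha / 2 - alpha / 2) with 0 by ring. rewrite Rabs_R0. field. }
  assert (Ee : Rmin (alpha / 2 + alpha / 2) (2 * alpha - alpha / 2 - alpha / 2) / 2 = alpha / 2).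
  { rewrite Rmin_left by lra. field. }
  rewrite Ed, Ee in E1, E2. rewrite Rmult_0_r in E2.
  split; [apply sector_P; lra|]. split; [apply sector_P; lra|].
  split; [apply P_neq_mod; lra|]. split; auto.
Qed.

Theorem lemma5p10 (alpha beta : R)
  (Ha : 0 < alpha <= PI) (Hb : 0 < beta <= PI) :
  let f := fun z => cpow z (beta / alpha) in
  let K := beta * sin (alpha / 2) / (alpha * sin (beta / 2)) in
  (alpha <= beta ->
     (forall x y, sector alpha x -> sector alpha y ->
        s_metric (sector alpha) x y <= s_metric (sector beta) (f x) (f y) /\
        s_metric (sector beta) (f x) (f y) <= K * s_metric (sector alpha) x y) /\
     (* sharpness *)
     (forall c, 1 < c -> exists x y, sector alpha x /\ sector alpha y /\ x <> y /\
        s_metric (sector beta) (f x) (f y) < c * s_metric (sector alpha) x y) /\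
     (forall c, c < K -> exists x y, sector alpha x /\ sector alpha y /\ x <> y /\
        c * s_metric (sector alpha) x y < s_metric (sector beta) (f x) (f y))) /\
  (beta < alpha ->
     (forall x y, sector alpha x -> sector alpha y ->
        K * s_metric (sector alpha) x y <= s_metric (sector beta) (f x) (f y) /\
        s_metric (sector beta) (f x) (f y) <= s_metric (sector alpha) x y) /\
     (forall c, K < c -> exists x y, sector alpha x /\ sector alpha y /\ x <> y /\
        s_metric (sector beta) (f x) (f y) < c * s_metric (sector alpha) x y) /\
     (forall c, c < 1 -> exists x y, sector alpha x /\ sector alpha y /\ x <> y /\
        c * s_metric (sector alpha) x y < s_metric (sector beta) (f x) (f y))).
Proof.
  cbv zeta. pose proof PI_RGT_0.
  assert (Hpg : beta / alpha * (alpha / 2) = beta / 2) by (field; lra).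
  assert (Hsb : 0 < sin (beta / 2)) by (apply sin_gt_0; lra).
  assert (HK : beta * sin (alpha / 2) / (alpha * sin (beta / 2)) =
               beta / alpha * sin (alpha / 2) / sin (beta / alpha * (alpha / 2))).
  { rewrite Hpg. field. lra. }
  rewrite HK.
  set (p := beta / alpha) in *.
  assert (Hp : 0 < p) by (unfold p; apply Rdiv_lt_0_compat; lra).
  split.
  - intros Hab.
    assert (Hp1 : 1 <= p).
    { unfold p. apply Rmult_le_reg_r with alpha; [lra|]. unfold Rdiv. rewrite Rmult_assoc, Rinv_l; lra. }
    split; [|split].
    + intros x y Hx Hy.
      destruct (pair_formula alpha beta x y Ha Hb Hx Hy) as [w [d [e [Hd [He [Heg [E1 E2]]]]]]].
      fold p in E2. rewrite E1, E2.
      apply mainA; auto. rewrite Hpg; lra.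
    + intros c Hc.
      destruct (sharp1F p (alpha / 2) c Hp1 ltac:(lra) ltac:(rewrite Hpg; lra) Hc) as [eps [Heps Hlt]].
      destruct (angle_family alpha beta eps Ha Hb Heps) as [Sx [Sy [Nxy [E1 E2]]]].
      fold p in E2.
      exists (P 1 (eps / 2)), (P 1 (3 * eps / 2)). split; [|split; [|split]]; auto.
      rewrite E1, E2. auto.
    + intros c Hc.
      destruct (sharp2F p (alpha / 2) c Hp1 ltac:(lra) ltac:(rewrite Hpg; lra) Hc) as [mu [Hmu Hall]].
      destruct (small_t mu Hmu) as [t [Ht Hts]].
      destruct (sh_ln_t t Ht) as [Esh Hw].
      destruct (bisector_family alpha beta t Ha Hb Ht) as [Sx [Sy [Nxy [E1 E2]]]].
      fold p in E2.
      exists (P 1 (alpha / 2)), (P t (alpha / 2)). split; [|split; [|split]]; auto.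
      rewrite E1, E2. apply Hall; auto. rewrite Esh. auto.
  - intros Hba.
    assert (Hp1 : p <= 1).
    { unfold p. apply Rmult_le_reg_r with alpha; [lra|]. unfold Rdiv. rewrite Rmult_assoc, Rinv_l; lra. }
    split; [|split].
    + intros x y Hx Hy.
      destruct (pair_formula alpha beta x y Ha Hb Hx Hy) as [w [d [e [Hd [He [Heg [E1 E2]]]]]]].
      fold p in E2. rewrite E1, E2.
      apply mainB; auto. lra.
    + intros c Hc.
      destruct (sharp3F p (alpha / 2) c ltac:(lra) ltac:(lra) Hc) as [mu [Hmu Hall]].
      destruct (small_t mu Hmu) as [t [Ht Hts]].
      destruct (sh_ln_t t Ht) as [Esh Hw].
      destruct (bisector_family alpha beta t Ha Hb Ht) as [Sx [Sy [Nxy [E1 E2]]]].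
      fold p in E2.
      exists (P 1 (alpha / 2)), (P t (alpha / 2)). split; [|split; [|split]]; auto.
      rewrite E1, E2. apply Hall; auto. rewrite Esh. auto.
    + intros c Hc.
      destruct (sharp4F p (alpha / 2) c ltac:(lra) ltac:(lra) Hc) as [eps [Heps Hlt]].
      destruct (angle_family alpha beta eps Ha Hb Heps) as [Sx [Sy [Nxy [E1 E2]]]].
      fold p in E2.
      exists (P 1 (eps / 2)), (P 1 (3 * eps / 2)). split; [|split; [|split]]; auto.
      rewrite E1, E2. auto.
Qed.
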